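(* For any abstract path $\tau$, $w(\tau)=1+O(\tau)+B(\tau)-s_1(\tau)-u_2(\tau)$.
   Context: $\mathbb F=\{0,1\}$, $\mathbb N=\{0,1,2,\dots\}$. Abstract vertex types: $o$ (interior), $u$ (unstable), $s$ (stable). An abstract edge is $\varepsilon=(\mu,(o_1,u_1,s_1),(o_2,u_2,s_2))\in\mathbb F\times\mathbb N^3\times\mathbb N^3$ with: if $\mu=0$ then $s_1=u_2=0$; if $\mu=1$ then $o_1=o_2=0$ (interior if $\mu=0$, boundary if $\mu=1$). Weight: $w(\varepsilon)=1$ if $\mu=0$, $2-s_1-u_2$ if $\mu=1$. An abstract path $\tau=(T,\tau,\sigma)$: a non-empty finite directed tree $T=(V,E)$ (nodes; arrows, or breaks), $\tau:V\to$ abstract edges, $\sigma:E\to\{o,u,s\}$, such that for each node $v$ and type $X$, $X_1(v)\ge|\{e:t(e)=v,\sigma(e)=X\}|$ and $X_2(v)\ge|\{e:s(e)=v,\sigma(e)=X\}|$, with $X_i(v)$ the entries of $\tau(v)$. Ends: $X_1(\tau)=\sum_vX_1(v)-|\sigma^{-1}(X)|$, $X_2(\tau)=\sum_vX_2(v)-|\sigma^{-1}(X)|$ (so $s_1(\tau)$ is the number of incoming stable ends, $u_2(\tau)$ of outgoing unstable ends). Weight $w(\tau)=\sum_vw(\tau(v))$. $O(\tau)=|\sigma^{-1}(o)|$ and $B(\tau)$ is the number of nodes $v$ with $\mu(v)=1$. *)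

(* Defs.v *)
From HB Require Import structures.
From mathcomp Require Import all_boot all_order all_algebra.
Set Implicit Arguments. Unset Strict Implicit. Unset Printing Implicit Defensive.
Import GRing.Theory Num.Theory.
Local Open Scope ring_scope.

(* Abstract vertex types: o (interior), u (unstable), s (stable). *)
Inductive vtype := VO | VU | VS.

Definition vtype_eqb (x y : vtype) : bool :=
  match x, y with VO, VO | VU, VU | VS, VS => true | _, _ => false end.
Lemma vtype_eqP : Equality.axiom vtype_eqb.
Proof. by case; case; constructor. Qed.
HB.instance Definition _ := hasDecEq.Build vtype vtype_eqP.

Record aedge := AEdge {
  mu : bool;
  o1 : nat; u1 : nat; s1 : nat;
  o2 : nat; u2 : nat; s2 : nat }.

Definition valid_aedge (a : aedge) : Prop :=
  if mu a then o1 a = 0%N /\ o2 a = 0%N else s1 a = 0%N /\ u2 a = 0%N.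

Definition entry1 (a : aedge) (X : vtype) : nat :=
  match X with VO => o1 a | VU => u1 a | VS => s1 a end.
Definition entry2 (a : aedge) (X : vtype) : nat :=
  match X with VO => o2 a | VU => u2 a | VS => s2 a end.

Definition aedge_weight (a : aedge) : int :=
  if mu a then (2%:Z - (s1 a)%:Z - (u2 a)%:Z)%R else 1%:Z.

Section Trees.
Variables (V E : finType) (src tgt : E -> V).

(* Walks in the underlying undirected multigraph: a step (e, true) traverses
   arrow e forwards (src -> tgt), (e, false) backwards (tgt -> src). *)
Fixpoint walk_end (x : V) (es : seq (E * bool)) : option V :=
  match es with
  | [::] => Some x
  | (e, b) :: es' =>
      if b then (if src e == x then walk_end (tgt e) es' else None)
      else (if tgt e == x then walk_end (src e) es' else None)
  end.

Definition ug_connected : Prop :=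
  forall x y : V, exists es, walk_end x es = Some y.

Definition ug_acyclic : Prop :=
  forall (x : V) (es : seq (E * bool)),
    es != [::] -> uniq (map fst es) -> walk_end x es <> Some x.

Definition directed_tree : Prop :=
  (0 < #|V|)%N /\ ug_connected /\ ug_acyclic.
End Trees.

Definition abstract_path (V E : finType) (src tgt : E -> V)
    (lab : V -> aedge) (sig : E -> vtype) : Prop :=
  [/\ directed_tree src tgt,
      forall v, valid_aedge (lab v),
      forall v X, (#|[set e | (tgt e == v) && (sig e == X)]| <= entry1 (lab v) X)%N
    & forall v X, (#|[set e | (src e == v) && (sig e == X)]| <= entry2 (lab v) X)%N].

Definition ends1 (V E : finType) (lab : V -> aedge) (sig : E -> vtype) (X : vtype) : int :=
  ((\sum_(v : V) entry1 (lab v) X)%N%:Z - #|[set e | sig e == X]|%:Z)%R.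
Definition ends2 (V E : finType) (lab : V -> aedge) (sig : E -> vtype) (X : vtype) : int :=
  ((\sum_(v : V) entry2 (lab v) X)%N%:Z - #|[set e | sig e == X]|%:Z)%R.

Definition path_weight (V : finType) (lab : V -> aedge) : int :=
  (\sum_(v : V) aedge_weight (lab v))%R.

Definition num_O (E : finType) (sig : E -> vtype) : nat := #|[set e | sig e == VO]|.
Definition num_B (V : finType) (lab : V -> aedge) : nat := #|[set v | mu (lab v)]|.

(* Main.v *)
Require Import Defs.
From mathcomp Require Import all_boot all_order all_algebra.
From mathcomp Require Import zify ring.
Set Implicit Arguments. Unset Strict Implicit. Unset Printing Implicit Defensive.

Section Walks.
Variables (V E : finType) (src tgt : E -> V).
Local Notation we := (walk_end src tgt).

Lemma walk_cat x y z s1 s2 : we x s1 = Some y -> we y s2 = Some z -> we x (s1 ++ s2) = Some z.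
Proof.
elim: s1 x => [|[e b] s IH] x /=; first by case=> ->.
by case: b; case: eqP => // _; apply: IH.
Qed.

Lemma walk_catE x z s1 s2 : we x (s1 ++ s2) = Some z -> exists y, we x s1 = Some y /\ we y s2 = Some z.
Proof.
elim: s1 x => [|[e b] s IH] x /=; first by exists x.
by case: b; case: eqP => // _; apply: IH.
Qed.

Lemma step_inv x y e b : we x [:: (e, b)] = Some y ->
  if b then src e = x /\ tgt e = y else tgt e = x /\ src e = y.
Proof. by case: b => /=; case: eqP => // -> [->]. Qed.

Definition flipp (p : E * bool) := (p.1, ~~ p.2).
Definition rev_walk (s : seq (E * bool)) := rev (map flipp s).

Lemma walk_rev x y s : we x s = Some y -> we y (rev_walk s) = Some x.
Proof.
elim: s x => [|[e b] s IH] x /=; first by case=> ->.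
rewrite /rev_walk /= rev_cons -cats1.
case: b; case: eqP => // <- h; apply: walk_cat (IH _ h) _ => /=; by rewrite eqxx.
Qed.

Lemma map_fst_rev s : map fst (rev_walk s) = rev (map fst s).
Proof. by rewrite /rev_walk map_rev -map_comp. Qed.

Lemma split_mem e (s : seq (E * bool)) : e \in map fst s ->
  exists s1 b s2, s = s1 ++ (e, b) :: s2.
Proof.
elim: s => [|[e' b'] s IH] //=; rewrite inE => /orP [/eqP ->|/IH [s1 [b [s2 ->]]]].
  by exists [::], b', s.
by exists ((e', b') :: s1), b, s2.
Qed.

Lemma shorten x y s : we x s = Some y -> exists s',
  [/\ we x s' = Some y, uniq (map fst s') & {subset map fst s' <= map fst s}].
Proof.
elim: s x => [|[e b] s IH] x h; first by exists [::].
have [x' [h1 h2]] := walk_catE (s1 := [:: (e, b)]) h.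
have [s'' [w2 u2 sub2]] := IH _ h2.
case: (boolP (e \in map fst s'')) => hin; last first.
  exists ((e, b) :: s''); split => //=.
  - by apply: walk_cat h1 w2.
  - by rewrite hin.
  - move=> f; rewrite !inE => /orP [->//|/sub2 ->]; by rewrite orbT.
have [s1 [b' [s2 E2]]] := split_mem hin.
rewrite E2 in w2 u2.
have [z [hz1 hz2]] := walk_catE w2.
have [w [hw1 hw2]] := walk_catE (s1 := [:: (e, b')]) hz2.
move: u2; rewrite map_cat cat_uniq /= => /and3P [_ _ /andP [ne u3]].
have subs : forall f, f \in map fst s2 -> f \in map fst ((e, b) :: s).
  move=> f hf; rewrite inE; apply/orP; right; apply: sub2; rewrite E2 map_cat mem_cat /= inE hf.
  by rewrite !orbT.
move: (step_inv h1) (step_inv hw1) => s1' s2'.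
destruct b; destruct b'; move: s1' s2' => [hx hx'] [hz hw].
- exists ((e, true) :: s2); split => //=; first by rewrite hx eqxx hw.
  + by rewrite ne.
  + move=> f; rewrite inE => /orP [/eqP ->|/subs //]; by rewrite inE eqxx.
- exists s2; split; [by rewrite -hx hw | done | by move=> f /subs].
- exists s2; split; [by rewrite -hx hw | done | by move=> f /subs].
- exists ((e, false) :: s2); split => //=; first by rewrite hx eqxx hw.
  + by rewrite ne.
  + move=> f; rewrite inE => /orP [/eqP ->|/subs //]; by rewrite inE eqxx.
Qed.

End Walks.

Section Tree.
Variables (V E : finType) (src tgt : E -> V).
Hypothesis conn : ug_connected src tgt.
Hypothesis acyc : ug_acyclic src tgt.
Variable r : V.
Local Notation we := (walk_end src tgt).

Definition dP v n := [exists t : n.-tuple (E * bool), we v t == Some r].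
Lemma dP_ex v : exists n, dP v n.
Proof.
have [es h] := conn v r; exists (size es); apply/existsP; exists (in_tuple es).
by rewrite h.
Qed.
Definition dist v := ex_minn (dP_ex v).

Lemma d_spec v : exists es, size es = dist v /\ we v es = Some r.
Proof.
rewrite /dist; case: ex_minnP => n /existsP [t /eqP h] _.
by exists t; rewrite size_tuple.
Qed.

Lemma d_min v es : we v es = Some r -> dist v <= size es.
Proof.
move=> h; rewrite /dist; case: ex_minnP => n _; apply.
by apply/existsP; exists (in_tuple es); rewrite h.
Qed.

Lemma d_step x e b y : we x [:: (e, b)] = Some y -> dist x <= (dist y).+1.
Proof.
move=> h; have [es [hs he]] := d_spec y.
by rewrite -hs; apply: (@d_min x ((e, b) :: es)); apply: (walk_cat h he).
Qed.

Lemma d_r : dist r = 0.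
Proof. by apply/eqP; rewrite -leqn0; exact: (@d_min r [::]). Qed.

Lemma d0 v : dist v = 0 -> v = r.
Proof.
move=> h; have [es [hs he]] := d_spec v; rewrite h in hs.
by move/size0nil: hs => hs; rewrite hs in he; case: he.
Qed.

Definition Qd K e := [&& dist (src e) <= K, dist (tgt e) <= K & dist (src e) != dist (tgt e)].

Lemma short_edges x es : we x es = Some r -> size es = dist x ->
  forall e, e \in map fst es -> Qd (dist x) e.
Proof.
elim: es x => [|[e b] s IH] x // h hs.
have [x' [h1 h2]] := walk_catE (s1 := [:: (e, b)]) h.
have m1 := d_min h2; have m2 := d_step h1.
simpl in hs.
have ex' : size s = dist x' by lia.
move=> f; rewrite inE => /orP [/eqP ->|hf].
  rewrite /Qd; have := step_inv h1; case: b {h h1} => [] [-> ->]; apply/and3P; split; lia.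
have := IH _ h2 ex' _ hf; rewrite /Qd => /and3P [q1 q2 q3]; apply/and3P; split => //; lia.
Qed.

Lemma no_cycle a b C : we b C = Some a -> C != [::] -> uniq (map fst C) ->
  (forall e, e \in map fst C -> ~~ Qd (maxn (dist a) (dist b)) e) -> False.
Proof.
move=> hC nC uC nQ.
have [Wa [sa wa]] := d_spec a; have [Wb [sb wb]] := d_spec b.
have W := walk_cat wa (walk_rev wb).
have [W' [w' u' sub']] := shorten W.
have QW : forall e, e \in map fst W' -> Qd (maxn (dist a) (dist b)) e.
  move=> e /sub'; rewrite map_cat mem_cat map_fst_rev mem_rev => /orP [] he.
    have := short_edges wa sa he; rewrite /Qd => /and3P [q1 q2 q3]; apply/and3P; split => //; lia.
  have := short_edges wb sb he; rewrite /Qd => /and3P [q1 q2 q3]; apply/and3P; split => //; lia.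
refine (acyc (x := a) (es := W' ++ C) _ _ _).
- by case: (W') nC => //; case: (C).
- rewrite map_cat cat_uniq u' uC andbT /=; apply/hasPn => e /nQ hn; apply/negP => /QW.
  by rewrite (negbTE hn).
- by apply: walk_cat w' hC.
Qed.

Definition par v e := ((src e == v) && ((dist (tgt e)).+1 == dist v)) ||
                      ((tgt e == v) && ((dist (src e)).+1 == dist v)).

Lemma par_ex v : v != r -> exists e, par v e.
Proof.
move=> nv; have [es [hs he]] := d_spec v.
case: es hs he => [|[e b] s] hs he.
  by case: he => hv; rewrite hv eqxx in nv.
have [x' [h1 h2]] := walk_catE (s1 := [:: (e, b)]) he.
have m1 := d_min h2; have m2 := d_step h1.
simpl in hs; exists e; rewrite /par.
have := step_inv h1; case: b {he h1} => [] [-> ->]; rewrite eqxx /=.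
  by apply/orP; left; apply/eqP; lia.
by apply/orP; right; apply/eqP; lia.
Qed.

Definition qmap v : option E := if v == r then None else [pick e | par v e].

Lemma qmap_inj : injective qmap.
Proof.
have pickS : forall v, v != r -> exists e, [pick e | par v e] = Some e /\ par v e.
  move=> v nv; case: pickP => [e pe|h]; first by exists e.
  by have [e pe] := par_ex nv; rewrite h in pe.
move=> v w; rewrite /qmap.
case: (eqVneq v r) => [->|nv]; case: (eqVneq w r) => [->|nw] //.
- by have [e [-> _]] := pickS _ nw.
- by have [e [-> _]] := pickS _ nv.
have [e [-> pv]] := pickS _ nv; have [e' [-> pw]] := pickS _ nw; case=> ee; subst e'.
move: pv pw; rewrite /par.
case/orP => /andP [/eqP hv /eqP dv]; case/orP => /andP [/eqP hw /eqP dw];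
  subst v w; first [done | lia].
Qed.

Lemma card_le : #|V| <= #|E|.+1.
Proof. by rewrite -card_option; apply: leq_card qmap_inj. Qed.

Definition far e := if dist (src e) < dist (tgt e) then tgt e else src e.
Definition oth e := if dist (src e) < dist (tgt e) then src e else tgt e.
Definition din e := dist (src e) < dist (tgt e).

Lemma d_neq e : dist (src e) != dist (tgt e).
Proof.
apply/negP => /eqP heq.
apply: (@no_cycle (tgt e) (src e) [:: (e, true)]) => //=.
- by rewrite eqxx.
- by move=> f; rewrite inE => /eqP ->; rewrite /Qd heq eqxx !andbF.
Qed.

Lemma oth_far e : dist (oth e) < dist (far e).
Proof. move/eqP: (d_neq e) => hn; rewrite /oth /far; case: (ltnP (dist (src e)) (dist (tgt e))) => h; lia. Qed.

Lemma step_in e : we (oth e) [:: (e, din e)] = Some (far e).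
Proof. by rewrite /oth /far /din; case: (ltnP (dist (src e)) (dist (tgt e))) => _ /=; rewrite eqxx. Qed.
Lemma step_out e : we (far e) [:: (e, ~~ din e)] = Some (oth e).
Proof. by rewrite /oth /far /din; case: (ltnP (dist (src e)) (dist (tgt e))) => _ /=; rewrite eqxx. Qed.

Lemma notQ e K : K < dist (far e) -> ~~ Qd K e.
Proof.
rewrite /far /Qd; case: (ltnP (dist (src e)) (dist (tgt e))) => _ h; apply/negP => /and3P [q1 q2 _]; lia.
Qed.

Definition gmap (o : option E) : V := if o is Some e then far e else r.

Lemma gmap_inj : injective gmap.
Proof.
have farr : forall e, far e != r.
  move=> e; apply/negP => /eqP h; have := oth_far e; rewrite h d_r; lia.
case=> [e|] [e'|] //=; last 2 first.
- by move=> h; move: (farr e); rewrite h eqxx.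
- by move=> h; move: (farr e'); rewrite h eqxx.
move=> hf; case: (eqVneq e e') => [->//|ne].
exfalso; apply: (@no_cycle (oth e) (oth e') [:: (e', din e'); (e, ~~ din e)]).
- apply: (walk_cat (s1 := [:: (e', din e')]) (step_in e')).
  by rewrite -hf; apply: step_out.
- done.
- by rewrite /= inE eq_sym ne.
- move=> f; rewrite !inE => /orP [] /eqP -> /=; apply: notQ.
    by have := oth_far e; have := oth_far e'; rewrite hf; lia.
  by have := oth_far e; have := oth_far e'; rewrite hf; lia.
Qed.

Lemma card_ge : #|E|.+1 <= #|V|.
Proof. by rewrite -card_option; apply: leq_card gmap_inj. Qed.

End Tree.

Lemma cardb (T : finType) (P : pred T) : #|[set x | P x]| = \sum_(x : T) (P x : nat).
Proof.
rewrite -sum1_card big_mkcond /=; apply: eq_bigr => x _; by rewrite inE; case: (P x).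
Qed.

Import GRing.Theory Num.Theory.
Local Open Scope ring_scope.

Theorem corollary3p12 (V E : finType) (src tgt : E -> V)
    (lab : V -> aedge) (sig : E -> vtype) :
  abstract_path src tgt lab sig ->
  path_weight lab =
    (1 + (num_O sig)%:Z + (num_B lab)%:Z - ends1 lab sig VS - ends2 lab sig VU)%R.
Proof.
case=> [[hV [conn acyc]] valid _ _].
have [r _] := card_gt0P hV.
have hcard : #|V| = (#|E|.+1)%N.
  by apply/eqP; rewrite eqn_leq (card_le conn r) (card_ge conn acyc r).
have hE : #|E| = (#|[set e | sig e == VO]| + #|[set e | sig e == VU]| + #|[set e | sig e == VS]|)%N.
  rewrite !cardb -!big_split /= -sum1_card; apply: eq_bigr => e _; by case: (sig e).
have hw : path_weight lab = \sum_(v : V) (1 + (mu (lab v) : nat)%:Z - (s1 (lab v))%:Z - (u2 (lab v))%:Z).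
  apply: eq_bigr => v _; have := valid v; rewrite /aedge_weight /valid_aedge.
  by case: (lab v) => [[] o1 u1 s1 o2 u2 s2] /= [h1 h2]; rewrite ?h1 ?h2 /=; lia.
have PS : forall (T : finType) (f : T -> nat), ((\sum_(x : T) f x)%N)%:Z = \sum_(x : T) (f x)%:Z.
  by move=> T f; apply: (big_morph Posz PoszD).
rewrite hw !sumrB big_split /= sumr_const.
rewrite /num_B cardb /ends1 /ends2 /num_O /= !PS.
rewrite (_ : #|xpredT| = #|E|.+1); last by rewrite -hcard.
rewrite hE.
rewrite natz -addn1 !PoszD; ring.
Qed.
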